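(* Every proper $K$-poset $V$ has a simplification; that is, there exist a finite integer $\ell\ge0$, proper $K$-posets $V_0=V,V_1,\dots,V_\ell$, and for each $1\le i\le\ell$ a maximal node $n_i$ of $V_{i-1}$ of positive height such that $V_i$ is a splitting of $V_{i-1}$ at $n_i$, with $V_\ell$ simple.
   Context: For a poset $U$: $L(u)=L_U(u)=\{v\le u\}$, $G(u)=\{v\ge u\}$, $L(u)^*,G(u)^*$ these with $u$ removed; height of $u$ is $\dim L(u)$ (dimension = supremum of chain lengths); $H_i$ = height-$i$ nodes; $\operatorname{mub}A$ = minimal common upper bounds; $[b/c]$ = set of $u$ with $G(u)^*=\{b\}$, $L(u)^*=\{c\}$. A poset with $\dim\le2$ is a $K$-poset if $\min U$, $H_2$ are finite, $\operatorname{mub}\{u,v\}$ is finite for distinct minimal $u,v$, and $[u/w]$ is infinite whenever $u>v>w$ for some $v$; proper if $|[u/w]|\in\{0,|U|\}$ for all maximal $u$, minimal $w$. $\mathcal H_U$ = minimal nodes plus height-one nodes dominating at least two minimal nodes. For a poset $W$ with single maximal node $n$ and $\dim W\ge1$: $\mathcal H_W^*=\mathcal H_W\setminus\{n\}$; $\Lambda_W$ = $(H_1\cap\mathcal H_W^* )$ together with all $v\in\mathcal H_W^*$ with $G(v)\cap H_1\cap\mathcal H_W^*=\emptyset$; $d_W(n)=|\Lambda_W|$. A proper $K$-poset $V$ is simple if $d_{L_V(m)}(m)=1$ for every maximal $m$ of positive height. Splitting: for a poset $V$ with a maximal node $m$ of positive height, $U$ is a splitting of $V$ at $m$ if there are a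 finite nonempty $\mathcal M\subseteq\max U$ of positive-height nodes and a surjective order-preserving $\varphi:U\to V$ with $\varphi^{-1}(m)=\mathcal M$, $|\varphi^{-1}(v)|=1$ for $v\ne m$, and whenever $\varphi(x')=x\le y$ there is $y'\ge x'$ with $\varphi(y')=y$. *)

(* Defs.v *)
(* Everything is stated relative to a subset S of
   the carrier, so that the "induced subposet" L_V(m) can be handled directly. *)
From Stdlib Require Import List Arith.

Record poset := Poset {
  car :> Type;
  le : car -> car -> Prop;
  le_refl : forall x, le x x;
  le_trans : forall x y z, le x y -> le y z -> le x z;
  le_antisym : forall x y, le x y -> le y x -> x = y
}.

Arguments le {p} _ _.

Section Defs.
Variable P : poset.
Implicit Types (S A : P -> Prop) (u v w x : P).

Definition lt x y := le x y /\ x <> y.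

(* a chain of length k (k+1 elements x0 < x1 < ... < xk) inside S *)
Definition chain_in S (k : nat) : Prop :=
  exists f : nat -> P, (forall i, i <= k -> S (f i)) /\
                       (forall i, i < k -> lt (f i) (f (Datatypes.S i))).

Definition dim_le S (k : nat) : Prop := ~ chain_in S (Datatypes.S k).

Definition finite_set A : Prop := exists l : list P, forall x, A x -> In x l.

Definition Lset S u : P -> Prop := fun v => S v /\ le v u.
Definition Gset S u : P -> Prop := fun v => S v /\ le u v.
Definition minimal_in S u := S u /\ forall v, S v -> le v u -> v = u.
Definition maximal_in S u := S u /\ forall v, S v -> le u v -> v = u.
Definition height_in S u (k : nat) :=
  S u /\ chain_in (Lset S u) k /\ ~ chain_in (Lset S u) (Datatypes.S k).
Definition pos_height_in S u := S u /\ chain_in (Lset S u) 1.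

Definition allP : P -> Prop := fun _ => True.

Definition mub2 u v : P -> Prop := fun w =>
  le u w /\ le v w /\
  forall w', le u w' -> le v w' -> le w' w -> w' = w.

Definition slash b c : P -> Prop := fun u =>
  (forall x, (le u x /\ x <> u) <-> x = b) /\
  (forall x, (le x u /\ x <> u) <-> x = c).

Definition empty_set A := forall x, ~ A x.
Definition same_card_as_carrier A : Prop :=
  exists f : {x : P | A x} -> P,
    (forall a b, f a = f b -> a = b) /\ (forall y, exists a, f a = y).

Definition K_poset : Prop :=
  dim_le allP 2 /\
  finite_set (minimal_in allP) /\
  finite_set (fun u => height_in allP u 2) /\
  (forall u v, minimal_in allP u -> minimal_in allP v -> u <> v ->
     finite_set (mub2 u v)) /\
  (forall u v w, lt v u -> lt w v -> ~ finite_set (slash u w)).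

Definition proper_K_poset : Prop :=
  K_poset /\
  forall u w, maximal_in allP u -> minimal_in allP w ->
    empty_set (slash u w) \/ same_card_as_carrier (slash u w).

Definition Hcal S v : Prop :=
  minimal_in S v \/
  (height_in S v 1 /\
   exists a b, a <> b /\ minimal_in S a /\ minimal_in S b /\ le a v /\ le b v).

(* For W = L_P(m) (single maximal node m): H*_W, Lambda_W, d_W(m) = 1 *)
Definition Hstar m v : Prop := Hcal (Lset allP m) v /\ v <> m.
Definition Lambda m v : Prop :=
  (height_in (Lset allP m) v 1 /\ Hstar m v) \/
  (Hstar m v /\
   ~ exists x, Gset (Lset allP m) v x /\ height_in (Lset allP m) x 1 /\ Hstar m x).
Definition d_is_one m : Prop :=
  exists x, Lambda m x /\ forall y, Lambda m y -> y = x.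

Definition simple : Prop :=
  proper_K_poset /\
  forall m, maximal_in allP m -> pos_height_in allP m -> d_is_one m.

End Defs.

Definition splitting (U V : poset) (m : V) : Prop :=
  exists (M : U -> Prop) (phi : U -> V),
    finite_set U M /\ (exists x, M x) /\
    (forall x, M x -> maximal_in U (allP U) x /\ pos_height_in U (allP U) x) /\
    (forall x y, le x y -> le (phi x) (phi y)) /\
    (forall y, exists x, phi x = y) /\
    (forall x, phi x = m <-> M x) /\
    (forall v, v <> m -> exists x, phi x = v /\ forall x', phi x' = v -> x' = x) /\
    (forall (x' : U) (y : V), le (phi x') y ->
       exists y', le x' y' /\ phi y' = y).

(* Main.v *)
Require Import Defs.
From Stdlib Require Import List Arith Lia Classical ClassicalEpsilon ProofIrrelevance.

Section Gen.
Variable P : poset.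
Implicit Types (S A B : P -> Prop) (u v w x y z a b c : P).

Lemma chain_ext A B k : (forall x, A x -> B x) -> chain_in P A k -> chain_in P B k.
Proof. intros H [f [H1 H2]]. exists f. split; auto. Qed.

Lemma lt_le_trans x y z : lt P x y -> le y z -> lt P x z.
Proof.
  intros [H1 H2] H3. split. eapply le_trans; eauto.
  intro E; subst. apply H2. apply le_antisym; auto.
Qed.

Lemma le_lt_trans x y z : le x y -> lt P y z -> lt P x z.
Proof.
  intros H1 [H3 H2]. split. eapply le_trans; eauto.
  intro E; subst. apply H2. apply le_antisym; auto.
Qed.

Lemma lt_trans' x y z : lt P x y -> lt P y z -> lt P x z.
Proof. intros H1 [H2 _]. eapply lt_le_trans; eauto. Qed.

Lemma lt_irrefl x : ~ lt P x x.
Proof. intros [_ H]; auto. Qed.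

Lemma lt_asym x y : lt P x y -> le y x -> False.
Proof. intros [H1 H2] H3. apply H2. apply le_antisym; auto. Qed.

Definition f3 (a0 a1 a2 a3 : P) (i : nat) : P :=
  match i with 0 => a0 | 1 => a1 | 2 => a2 | _ => a3 end.

Lemma chain1 x : chain_in P (Lset P (allP P) x) 1 <-> exists y, lt P y x.
Proof.
  split.
  - intros [f [H1 H2]]. exists (f 0).
    destruct (H1 1 (le_n _)) as [_ H]. eapply lt_le_trans; eauto.
  - intros [y Hy]. exists (f3 y x x x). split.
    + intros i Hi. destruct i as [|[|]]; simpl; split; try exact I; try lia.
      apply Hy. apply le_refl.
    + intros i Hi. destruct i; [|lia]. exact Hy.
Qed.

Lemma chain2 x : chain_in P (Lset P (allP P) x) 2 <-> exists y z, lt P z y /\ lt P y x.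
Proof.
  split.
  - intros [f [H1 H2]]. exists (f 1), (f 0). split. apply H2; lia.
    destruct (H1 2 (le_n _)) as [_ H]. eapply lt_le_trans; eauto.
  - intros [y [z [Hz Hy]]]. exists (f3 z y x x). split.
    + intros i Hi. destruct i as [|[|[|]]]; simpl; split; try exact I; try lia.
      * apply le_trans with y. apply Hz. apply Hy.
      * apply Hy.
      * apply le_refl.
    + intros i Hi. destruct i as [|[|]]; simpl; auto; lia.
Qed.

Lemma chain3_all : chain_in P (allP P) 3 <-> exists a0 a1 a2 a3, lt P a0 a1 /\ lt P a1 a2 /\ lt P a2 a3.
Proof.
  split.
  - intros [f [H1 H2]]. exists (f 0), (f 1), (f 2), (f 3). repeat split; apply H2; lia.
  - intros [a0 [a1 [a2 [a3 [H1 [H2 H3]]]]]]. exists (f3 a0 a1 a2 a3). split.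
    + intros; exact I.
    + intros i Hi. destruct i as [|[|[|]]]; simpl; auto; lia.
Qed.

Definition dim2 := dim_le P (allP P) 2.

Lemma dim2_no3 : dim2 -> forall a0 a1 a2 a3, lt P a0 a1 -> lt P a1 a2 -> lt P a2 a3 -> False.
Proof. intros H a0 a1 a2 a3 H1 H2 H3. apply H. apply chain3_all. eauto 10. Qed.

Definition isMin x := forall y, le y x -> y = x.
Definition ht1 x := (exists y, lt P y x) /\ ~ exists y z, lt P z y /\ lt P y x.
Definition ht2 x := exists y z, lt P z y /\ lt P y x.

Lemma Lset_down c v y : le v c -> (Lset P (Lset P (allP P) c) v y <-> Lset P (allP P) v y).
Proof.
  intros H. unfold Lset, allP. split.
  - intros [_ H1]. split; auto.
  - intros [_ H1]. split; auto. split; auto. eapply le_trans; eauto.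
Qed.

Lemma chain_down c v k : le v c ->
  (chain_in P (Lset P (Lset P (allP P) c) v) k <-> chain_in P (Lset P (allP P) v) k).
Proof.
  intros H. split; apply chain_ext; intros y; apply (Lset_down c v y H).
Qed.

Lemma minimal_all x : minimal_in P (allP P) x <-> isMin x.
Proof.
  split. intros [_ H] y Hy. apply H; auto. exact I.
  intros H. split. exact I. intros v _ Hv. apply H; auto.
Qed.

Lemma minimal_L c v : minimal_in P (Lset P (allP P) c) v <-> le v c /\ isMin v.
Proof.
  split.
  - intros [[_ H1] H2]. split; auto. intros y Hy. apply H2; auto.
    split. exact I. eapply le_trans; eauto.
  - intros [H1 H2]. split. split; auto. exact I. intros y _ Hy; apply H2; auto.
Qed.

Lemma height1_L c v : height_in P (Lset P (allP P) c) v 1 <-> le v c /\ ht1 v.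
Proof.
  unfold height_in. split.
  - intros [[_ H1] [H2 H3]]. split; auto.
    rewrite chain_down in H2, H3 by auto. rewrite chain1 in H2. rewrite chain2 in H3.
    split; auto.
  - intros [H1 [H2 H3]]. split. split; auto. exact I.
    rewrite !chain_down by auto. rewrite chain1, chain2. split; auto.
Qed.

Lemma height_all v k : height_in P (allP P) v k <->
  chain_in P (Lset P (allP P) v) k /\ ~ chain_in P (Lset P (allP P) v) (S k).
Proof.
  unfold height_in. split. intros [_ H]; auto. intros H; split; auto. exact I.
Qed.

Lemma height2_all v : dim2 -> (height_in P (allP P) v 2 <-> ht2 v).
Proof.
  intros D. rewrite height_all. rewrite chain2. split. intros [H _]; auto.
  intros H. split; auto. intros C. apply D. eapply chain_ext; [|exact C].
  intros; exact I.
Qed.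

Lemma pos_height_iff v : pos_height_in P (allP P) v <-> exists y, lt P y v.
Proof.
  unfold pos_height_in. rewrite <- chain1. split. intros [_ H]; auto.
  intros H; split; auto. exact I.
Qed.

Definition Hc c v := le v c /\ (isMin v \/ (ht1 v /\ exists a b, a <> b /\ isMin a /\ isMin b /\ le a v /\ le b v)).
Definition Hs c v := Hc c v /\ v <> c.
Definition Lam c v := (ht1 v /\ Hs c v) \/
  (Hs c v /\ ~ exists x, le x c /\ le v x /\ ht1 x /\ Hs c x).

Lemma Hcal_iff c v : Hcal P (Lset P (allP P) c) v <-> Hc c v.
Proof.
  unfold Hcal, Hc. rewrite minimal_L, height1_L. split.
  - intros [[H1 H2]|[[H1 H2] [a [b [H3 [H4 [H5 [H6 H7]]]]]]]].
    + auto.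
    + split; auto. right. split; auto. exists a, b.
      rewrite minimal_L in H4, H5. intuition.
  - intros [H1 [H2|[H2 [a [b [H3 [H4 [H5 [H6 H7]]]]]]]]].
    + auto.
    + right. split; auto. exists a, b. rewrite !minimal_L.
      repeat split; auto; eapply le_trans; eauto.
Qed.

Lemma Hstar_iff c v : Hstar P c v <-> Hs c v.
Proof. unfold Hstar, Hs. rewrite Hcal_iff. tauto. Qed.

Lemma Lambda_iff c v : Lambda P c v <-> Lam c v.
Proof.
  unfold Lambda, Lam. rewrite !Hstar_iff, height1_L.
  split.
  - intros [[[H1 H2] H3]|[H1 H2]].
    + left; auto.
    + right. split; auto. intros [x [H3 [H4 [H5 H6]]]]. apply H2. exists x.
      split. unfold Gset, Lset, allP. auto. split. apply height1_L; auto.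
      apply Hstar_iff; auto.
  - intros [[H1 H2]|[H1 H2]].
    + left. split; auto. split; auto. apply H2.
    + right. split; auto. intros [x [[[_ H3] H4] [H5 H6]]]. apply H2. exists x.
      rewrite Hstar_iff in H6. rewrite height1_L in H5. intuition.
Qed.

Lemma d_one_iff c : d_is_one P c <-> exists x, Lam c x /\ forall y, Lam c y -> y = x.
Proof.
  unfold d_is_one. split; intros [x [H1 H2]]; exists x; split;
    try (apply Lambda_iff; auto); intros y Hy; apply H2; apply Lambda_iff; auto.
Qed.

End Gen.

Definition injf {X Y : Type} (f : X -> Y) := forall a b, f a = f b -> a = b.
Definition surjf {X Y : Type} (f : X -> Y) := forall y, exists a, f a = y.
Definition equi (X Y : Type) := exists f : X -> Y, injf f /\ surjf f.

Lemma sig_eq {X : Type} (A : X -> Prop) (a b : {x | A x}) : proj1_sig a = proj1_sig b -> a = b.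
Proof.
  destruct a as [a Ha], b as [b Hb]; simpl; intros E; subst. f_equal. apply proof_irrelevance.
Qed.

Lemma bij_inv {X Y : Type} (f : X -> Y) : injf f -> surjf f ->
  exists g : Y -> X, (forall x, g (f x) = x) /\ (forall y, f (g y) = y).
Proof.
  intros Hi Hs.
  exists (fun y => proj1_sig (constructive_indefinite_description _ (Hs y))).
  split.
  - intros x. destruct (constructive_indefinite_description _ (Hs (f x))) as [a Ha]; simpl. auto.
  - intros y. destruct (constructive_indefinite_description _ (Hs y)) as [a Ha]; simpl. auto.
Qed.

Lemma equi_refl X : equi X X.
Proof. exists (fun x => x). split. intros a b; auto. intros y; eauto. Qed.

Lemma equi_sym X Y : equi X Y -> equi Y X.
Proof.
  intros [f [Hi Hs]]. destruct (bij_inv f Hi Hs) as [g [H1 H2]]. exists g. split.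
  - intros a b E. rewrite <- (H2 a), <- (H2 b), E; auto.
  - intros x. exists (f x); auto.
Qed.

Lemma equi_trans X Y Z : equi X Y -> equi Y Z -> equi X Z.
Proof.
  intros [f [Hi Hs]] [g [Gi Gs]]. exists (fun x => g (f x)). split.
  - intros a b E. auto.
  - intros z. destruct (Gs z) as [y Hy]. destruct (Hs y) as [x Hx]. exists x. congruence.
Qed.

Section SB.
Variables (X Y : Type) (f : X -> Y) (g : Y -> X).
Hypotheses (fi : injf f) (gi : injf g).

Inductive Cset : X -> Prop :=
| Cb x : (~ exists y, g y = x) -> Cset x
| Cs x : Cset x -> Cset (g (f x)).

Lemma notC_range x : ~ Cset x -> exists y, g y = x.
Proof. intros H. apply NNPP. intros H2. apply H. constructor. auto. Qed.

Definition hSB (x : X) : Y :=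
  match excluded_middle_informative (Cset x) with
  | left _ => f x
  | right nc => proj1_sig (constructive_indefinite_description _ (notC_range x nc))
  end.

Lemma hSB_C x : Cset x -> hSB x = f x.
Proof. intros H. unfold hSB. destruct (excluded_middle_informative (Cset x)) as [c|c]; [reflexivity|contradiction]. Qed.

Lemma hSB_nC x : ~ Cset x -> g (hSB x) = x.
Proof.
  intros H. unfold hSB. destruct (excluded_middle_informative (Cset x)) as [c|c]; [contradiction|].
  destruct (constructive_indefinite_description _ _); simpl; auto.
Qed.

Lemma SB : equi X Y.
Proof.
  exists hSB. split.
  - intros a b E.
    destruct (classic (Cset a)) as [Ca|Ca]; destruct (classic (Cset b)) as [Cb'|Cb'].
    + rewrite !hSB_C in E by auto. auto.
    + exfalso. apply Cb'. rewrite <- (hSB_nC b Cb'). rewrite <- E, hSB_C by auto.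
      apply Cs; auto.
    + exfalso. apply Ca. rewrite <- (hSB_nC a Ca). rewrite E, hSB_C by auto.
      apply Cs; auto.
    + rewrite <- (hSB_nC a Ca), <- (hSB_nC b Cb'). congruence.
  - intros y. destruct (classic (Cset (g y))) as [C|C].
    + inversion C as [x H E|x H E].
      * exfalso. apply H. eauto.
      * apply gi in E. exists x. rewrite hSB_C; auto.
    + exists (g y). apply gi. apply hSB_nC; auto.
Qed.
End SB.

Definition big {X : Type} (A : X -> Prop) :=
  exists i : X -> X, injf i /\ forall x, A x <-> exists y, i y = x.

Lemma big_ext {X : Type} (A B : X -> Prop) : (forall x, A x <-> B x) -> big A -> big B.
Proof. intros H [i [H1 H2]]. exists i. split; auto. intros x. rewrite <- H. auto. Qed.

Lemma equi_big {X : Type} (A : X -> Prop) : equi {x | A x} X -> big A.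
Proof.
  intros E. apply equi_sym in E. destruct E as [g [Gi Gs]].
  exists (fun y => proj1_sig (g y)). split.
  - intros a b E. apply Gi. apply sig_eq. auto.
  - intros x. split.
    + intros Ax. destruct (Gs (exist _ x Ax)) as [y Hy]. exists y. rewrite Hy. auto.
    + intros [y Hy]. subst. apply (proj2_sig (g y)).
Qed.

Lemma big_equi {X : Type} (A : X -> Prop) : big A -> equi {x | A x} X.
Proof.
  intros [i [Hi Hr]]. apply equi_sym.
  assert (H : forall y, A (i y)) by (intros y; apply Hr; eauto).
  exists (fun y => exist _ (i y) (H y)). split.
  - intros a b E. apply Hi. apply (f_equal (@proj1_sig _ _)) in E. auto.
  - intros [x Ax]. destruct (proj1 (Hr x) Ax) as [y Hy]. exists y. apply sig_eq. simpl. auto.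
Qed.

Lemma equi_map {X Y : Type} (F : X -> Y) (A : X -> Prop) (B : Y -> Prop) :
  (forall x, A x -> B (F x)) -> (forall a b, A a -> A b -> F a = F b -> a = b) ->
  (forall y, B y -> exists x, A x /\ F x = y) -> equi {x | A x} {y | B y}.
Proof.
  intros H1 H2 H3. exists (fun a => exist _ (F (proj1_sig a)) (H1 _ (proj2_sig a))). split.
  - intros [a Ha] [b Hb] E. apply (f_equal (@proj1_sig _ _)) in E. simpl in E.
    apply sig_eq. simpl. auto.
  - intros [y Hy]. destruct (H3 y Hy) as [x [Ax E]]. exists (exist _ x Ax). apply sig_eq. simpl. auto.
Qed.

Lemma double_from_two {X : Type} (A B : X -> Prop) :
  (forall x, A x -> B x -> False) -> big A -> big B -> equi (X + X) X.
Proof.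
  intros D [i [Hi Hr]] [j [Hj Hs]].
  apply (SB _ _ (fun s => match s with inl x => i x | inr x => j x end) inl).
  - intros [a|a] [b|b] E.
    + f_equal; auto.
    + exfalso. apply (D (i a)). apply Hr; eauto. apply Hs. eauto.
    + exfalso. apply (D (i b)). apply Hr; eauto. apply Hs. eauto.
    + f_equal; auto.
  - intros a b E. injection E; auto.
Qed.

Lemma partition_big {X T : Type} (e : X + X -> X) : injf e -> surjf e ->
  forall (L : list T), NoDup L -> L <> nil ->
  forall i : X -> X, injf i ->
  exists q : X -> T, (forall x, In (q x) L) /\
    forall t, In t L -> big (fun x => (exists y, i y = x) /\ q x = t).
Proof.
  intros ei es L. induction L as [|t L IH]; intros ND NE i ii. congruence.
  destruct L as [|t' L'].
  - exists (fun _ => t). split. simpl; auto.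
    intros t0 [E|[]]; subst. exists i. split; auto. intros x. split. tauto. intros; split; auto.
  - inversion ND as [|? ? Hn ND']; subst.
    set (i1 := fun y => i (e (inl y))). set (i2 := fun y => i (e (inr y))).
    assert (i2i : injf i2). { intros a b E. apply ii, ei in E. injection E; auto. }
    destruct (IH ND' ltac:(congruence) i2 i2i) as [q' [Hq1 Hq2]].
    exists (fun x => if excluded_middle_informative (exists y, i1 y = x) then t else q' x).
    split.
    + intros x. destruct (excluded_middle_informative _); [left; reflexivity | right; apply Hq1].
    + assert (Hsplit : forall x, (exists y, i y = x) -> (exists y, i1 y = x) \/ (exists y, i2 y = x)).
      { intros x [y Hy]. destruct (es y) as [[z|z] Hz]; subst; [left|right]; exists z; reflexivity. }
      assert (Hdis : forall x, (exists y, i1 y = x) -> (exists y, i2 y = x) -> False).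
      { intros x [a Ha] [b Hb]. subst. apply ii, ei in Hb. discriminate. }
      intros t0 [E|Ht0].
      * subst t0. exists i1. split.
        { intros a b E. apply ii, ei in E. injection E; auto. }
        intros x. split.
        -- intros [Hx Hq]. destruct (excluded_middle_informative (exists y, i1 y = x)) as [H|H]; auto.
           exfalso. apply Hn. rewrite <- Hq. auto.
        -- intros H. split. destruct H as [y Hy]; exists (e (inl y)); exact Hy.
           destruct (excluded_middle_informative (exists y, i1 y = x)); tauto.
      * destruct (Hq2 t0 Ht0) as [k [Hk Hr]]. exists k. split; auto. intros x. rewrite <- Hr.
        split.
        -- intros [Hx Hq]. destruct (excluded_middle_informative (exists y, i1 y = x)) as [H|H].
           ++ subst. tauto.
           ++ split; auto. destruct (Hsplit x Hx); tauto.
        -- intros [[y Hy] Hq]. split. exists (e (inr y)); exact Hy.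
           destruct (excluded_middle_informative (exists y, i1 y = x)) as [H|H]; auto.
           exfalso. eapply Hdis; eauto.
Qed.

Section VA.
Variable V : poset.
Implicit Types (x y z t a b c s : V).

Definition twoMin x := exists a b, a <> b /\ isMin V a /\ isMin V b /\ le a x /\ le b x.

Lemma notmin_lt x : ~ isMin V x -> exists y, lt V y x.
Proof.
  intros H. apply NNPP. intros H2. apply H. intros y Hy. apply NNPP. intros E.
  apply H2. exists y. split; auto.
Qed.

Lemma min_nlt x y : isMin V x -> lt V y x -> False.
Proof. intros H [H1 H2]. apply H2. apply H; auto. Qed.

Lemma lt_notmin x y : lt V y x -> ~ isMin V x.
Proof. intros H1 H2. eapply min_nlt; eauto. Qed.

Lemma slash_iff b c t : slash V b c t <->
  ((lt V t b /\ forall s, lt V t s -> s = b) /\ (lt V c t /\ forall s, lt V s t -> s = c)).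
Proof.
  unfold slash, lt. split.
  - intros [H1 H2]. split; split.
    + destruct (proj2 (H1 b) eq_refl) as [X1 X2]. split; auto.
    + intros s [X1 X2]. apply H1. split; auto.
    + destruct (proj2 (H2 c) eq_refl) as [X1 X2]. split; auto.
    + intros s [X1 X2]. apply H2. auto.
  - intros [[[X1 X2] X3] [[X4 X5] X6]]. split.
    + intros s. split. intros [Y1 Y2]. apply X3. split; auto.
      intros E; subst; split; auto.
    + intros s. split. intros [Y1 Y2]. apply X6. auto.
      intros E; subst; split; auto.
Qed.

Variable m : V.
Hypothesis D : dim2 V.
Hypothesis mmax : forall y, le m y -> y = m.

Lemma below_min x z : lt V x m -> lt V z x -> isMin V z.
Proof.
  intros H1 H2. apply NNPP. intros H3. destruct (notmin_lt z H3) as [w Hw].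
  eapply dim2_no3; eauto.
Qed.

Lemma ht1_below x : lt V x m -> (ht1 V x <-> ~ isMin V x).
Proof.
  intros Hx. split.
  - intros [[y Hy] _]. eapply lt_notmin; eauto.
  - intros H. split. apply notmin_lt; auto.
    intros [y [z [H1 H2]]]. apply (min_nlt y z); auto. eapply below_min; eauto.
Qed.

Lemma exists_min x : exists z, le z x /\ isMin V z.
Proof.
  destruct (classic (isMin V x)) as [H|H]. exists x; split; auto. apply le_refl.
  destruct (notmin_lt x H) as [y Hy].
  destruct (classic (isMin V y)) as [H'|H']. exists y; split; auto. apply Hy.
  destruct (notmin_lt y H') as [w Hw].
  destruct (classic (isMin V w)) as [H''|H'']. exists w; split; auto.
  apply le_trans with y. apply Hw. apply Hy.
  destruct (notmin_lt w H'') as [u Hu]. exfalso. eapply dim2_no3; eauto.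
Qed.

Definition LamV := Lam V m.

Lemma Lam_lt l0 : LamV l0 -> lt V l0 m.
Proof.
  intros [[_ [[H1 _] H2]]|[[[H1 _] H2] _]]; split; auto.
Qed.

Lemma Lam_cases l0 : LamV l0 -> lt V l0 m /\
  ((ht1 V l0 /\ twoMin l0) \/
   (isMin V l0 /\ ~ exists x, le x m /\ le l0 x /\ ht1 V x /\ Hs V m x)).
Proof.
  intros H. split. apply Lam_lt; auto.
  destruct H as [[H1 [[_ [H2|H2]] _]]|[[[_ [H2|H2]] _] H3]].
  - exfalso. destruct H1 as [[y Hy] _]. eapply min_nlt; eauto.
  - left. split; auto. apply H2.
  - right. auto.
  - left. apply H2.
Qed.

Lemma Lam_H t : lt V t m -> ht1 V t -> twoMin t -> LamV t.
Proof.
  intros [H1 H2] H3 H4. left. split; auto. split; auto. split; auto.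
Qed.

Lemma Lam_min c : lt V c m -> isMin V c ->
  ~ (exists x, le x m /\ le c x /\ ht1 V x /\ Hs V m x) -> LamV c.
Proof. intros [H1 H2] H3 H4. right. split; auto. split; auto. split; auto. Qed.

Lemma min_covered c : lt V c m -> isMin V c -> exists l0, LamV l0 /\ le c l0.
Proof.
  intros H1 H2. destruct (classic (exists x, le x m /\ le c x /\ ht1 V x /\ Hs V m x))
    as [[x [X1 [X2 [X3 X4]]]]|H].
  - exists x. split; auto. left. auto.
  - exists c. split. apply Lam_min; auto. apply le_refl.
Qed.

Definition S1 x := lt V x m /\ ~ exists l0, LamV l0 /\ le x l0.

Lemma S1_notmin x : S1 x -> ~ isMin V x.
Proof.
  intros [H1 H2] H3. destruct (min_covered x H1 H3) as [l0 [L1 L2]]. eauto.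
Qed.

Lemma S1_notLam x : S1 x -> ~ LamV x.
Proof. intros [_ H] H2. apply H. exists x. split; auto. apply le_refl. Qed.

Lemma S1_unique x : S1 x -> exists c, lt V c x /\ isMin V c /\ forall z, lt V z x -> z = c.
Proof.
  intros HS. destruct (notmin_lt x (S1_notmin x HS)) as [c Hc].
  destruct HS as [Hm HS].
  assert (Hmin : forall z, lt V z x -> isMin V z) by (intros; eapply below_min; eauto).
  exists c. split; auto. split; auto. intros z Hz. apply NNPP. intros E.
  apply HS. exists x. split; [|apply le_refl]. apply Lam_H; auto.
  apply ht1_below; auto. eapply lt_notmin; eauto.
  exists z, c. repeat split; auto. apply Hz. apply Hc.
Qed.

Lemma S1_ht1 x : S1 x -> ht1 V x.
Proof. intros H. apply ht1_below. apply H. apply S1_notmin; auto. Qed.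

Lemma S1_not_twoMin x : S1 x -> ~ twoMin x.
Proof.
  intros H H2. apply (S1_notLam x H). apply Lam_H; auto. apply H. apply S1_ht1; auto.
Qed.

End VA.

Section Split.
Variable V : poset.
Variable m : V.
Hypothesis D : dim2 V.
Hypothesis mmax : forall y, le m y -> y = m.
Hypothesis mpos : exists y, lt V y m.
Variable l : list V.
Hypothesis lND : NoDup l.
Hypothesis lSpec : forall v, LamV V m v <-> In v l.
Variable sel : V -> V.
Hypothesis selS : forall x, S1 V m x -> LamV V m (sel x) /\ forall z, lt V z x -> le z (sel x).

Definition n := length l.
Definition lamOf k := nth k l m.

Lemma n_pos : 0 < n.
Proof.
  destruct mpos as [y Hy]. destruct (exists_min V D y) as [c [H1 H2]].
  assert (Hc : lt V c m) by (eapply le_lt_trans; eauto).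
  destruct (min_covered V m c Hc H2) as [l0 [L1 _]].
  apply lSpec in L1. unfold n. destruct l. destruct L1. simpl; lia.
Qed.

Lemma lamOf_Lam k : k < n -> LamV V m (lamOf k).
Proof. intros H. apply lSpec. apply nth_In. auto. Qed.

Lemma Lam_lamOf v : LamV V m v -> exists k, k < n /\ lamOf k = v.
Proof. intros H. apply lSpec in H. apply In_nth with (d := m) in H. auto. Qed.

Lemma lamOf_inj k k' : k < n -> k' < n -> lamOf k = lamOf k' -> k = k'.
Proof. intros H1 H2 E. eapply NoDup_nth; eauto. Qed.

Definition R (x : V) (k : nat) : Prop :=
  lt V x m /\ (le x (lamOf k) \/ (S1 V m x /\ sel x = lamOf k)).

Lemma R_down x y k : R y k -> le x y -> R x k.
Proof.
  intros [H1 [H2|[H2 H3]]] H.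
  - split. eapply le_lt_trans; eauto. left. eapply le_trans; eauto.
  - split. eapply le_lt_trans; eauto.
    destruct (classic (x = y)) as [E|E]. subst. right; auto.
    left. rewrite <- H3. apply (proj2 (selS y H2)). split; auto.
Qed.

Lemma cover x : lt V x m -> exists k, k < n /\ R x k.
Proof.
  intros Hx. destruct (classic (S1 V m x)) as [HS|HS].
  - destruct (Lam_lamOf _ (proj1 (selS x HS))) as [k [Hk E]].
    exists k. split; auto. split; auto.
  - assert (exists l0, LamV V m l0 /\ le x l0).
    { apply NNPP. intros H. apply HS. split; auto. }
    destruct H as [l0 [L1 L2]]. destruct (Lam_lamOf _ L1) as [k [Hk E]].
    exists k. split; auto. split; auto. left. congruence.
Qed.

Definition Ucar := ({x : V | x <> m} + {k : nat | k < n})%type.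

Definition leU (a b : Ucar) : Prop :=
  match a, b with
  | inl x, inl y => le (proj1_sig x) (proj1_sig y)
  | inl x, inr k => R (proj1_sig x) (proj1_sig k)
  | inr k, inr k' => proj1_sig k = proj1_sig k'
  | inr _, inl _ => False
  end.

Lemma leU_refl a : leU a a.
Proof. destruct a; simpl; auto. apply le_refl. Qed.

Lemma leU_trans a b c : leU a b -> leU b c -> leU a c.
Proof.
  destruct a as [x|k], b as [y|k'], c as [z|k'']; simpl; intros H1 H2; try tauto.
  - eapply le_trans; eauto.
  - eapply R_down; eauto.
  - rewrite <- H2; auto.
  - congruence.
Qed.

Lemma leU_antisym a b : leU a b -> leU b a -> a = b.
Proof.
  destruct a as [x|k], b as [y|k']; simpl; intros H1 H2; try tauto.
  - f_equal. apply sig_eq. apply le_antisym; auto.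
  - f_equal. apply sig_eq. auto.
Qed.

Definition U : poset := Poset Ucar leU leU_refl leU_trans leU_antisym.

Definition phi (u : U) : V := match u with inl x => proj1_sig x | inr _ => m end.

Definition copy (k : nat) : U :=
  match lt_dec k n with
  | left h => inr (exist _ k h)
  | right _ => inr (exist _ 0 n_pos)
  end.

Lemma copy_eq k (h : k < n) : copy k = inr (exist _ k h).
Proof.
  unfold copy. destruct (lt_dec k n); try lia. f_equal. apply sig_eq. reflexivity.
Qed.

Definition psi (v : V) : U :=
  match excluded_middle_informative (v = m) with
  | left _ => copy 0
  | right h => inl (exist _ v h)
  end.

Lemma psi_inl v (h : v <> m) : psi v = inl (exist _ v h).
Proof.
  unfold psi. destruct (excluded_middle_informative (v = m)); [contradiction|].
  f_equal. apply sig_eq. reflexivity.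
Qed.

Lemma ne_below y x : le y x -> x <> m -> y <> m.
Proof. intros H1 H2 E. subst. apply H2. apply mmax. auto. Qed.

Lemma le_inl (x y : {x : V | x <> m}) : @le U (inl x) (inl y) <-> le (proj1_sig x) (proj1_sig y).
Proof. simpl. tauto. Qed.

Lemma lt_inl (x y : {x : V | x <> m}) : lt U (inl x) (inl y) <-> lt V (proj1_sig x) (proj1_sig y).
Proof.
  unfold lt. simpl. split; intros [H1 H2]; split; auto.
  - intros E. apply H2. f_equal. apply sig_eq. auto.
  - intros E. apply H2. injection E. intros ->. reflexivity.
Qed.

Lemma below_inl (b : U) (x : {x : V | x <> m}) : le b (inl x : U) -> exists y, b = inl y.
Proof. destruct b as [y|k]; simpl; intros H. eauto. destruct H. Qed.

Lemma phi_mono a b : le a b -> le (phi a) (phi b).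
Proof.
  destruct a as [x|k], b as [y|k']; simpl; intros H; auto; try destruct H.
  apply H. apply le_refl.
Qed.

Lemma phi_strict a b : lt U a b -> lt V (phi a) (phi b).
Proof.
  intros [H1 H2]. destruct a as [x|k], b as [y|k']; simpl in *.
  - split; auto. intros E. apply H2. f_equal. apply sig_eq. auto.
  - apply H1.
  - destruct H1.
  - exfalso. apply H2. f_equal. apply sig_eq. auto.
Qed.

Lemma inr_max (k : {k : nat | k < n}) (b : U) : le (inr k : U) b -> b = inr k.
Proof.
  destruct b as [y|k']; simpl; intros H. destruct H. f_equal. apply sig_eq. auto.
Qed.

Lemma inr_pos (k : {k : nat | k < n}) : lt U (inl (exist _ (lamOf (proj1_sig k))
   (proj2 (Lam_lt V m _ (lamOf_Lam _ (proj2_sig k)))))) (inr k).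
Proof.
  split. simpl. split. apply Lam_lt. apply lamOf_Lam. apply proj2_sig. left. apply le_refl.
  discriminate.
Qed.

Lemma inl_max (x : {x : V | x <> m}) : (forall b : U, le (inl x : U) b -> b = inl x) <->
  (forall y, le (proj1_sig x) y -> y = proj1_sig x).
Proof.
  split.
  - intros H y Hy. destruct (classic (y = m)) as [E|E].
    + subst. destruct (classic (proj1_sig x = m)) as [E'|E']. auto.
      destruct (cover (proj1_sig x)) as [k [Hk HR]]. split; auto.
      specialize (H (inr (exist _ k Hk)) HR). discriminate.
    + specialize (H (inl (exist _ y E)) Hy). injection H. intros <-. reflexivity.
  - intros H b Hb. destruct b as [y|k].
    + simpl in Hb. f_equal. apply sig_eq. apply H; auto.
    + simpl in Hb. destruct Hb as [[H1 H2] _]. exfalso. apply H2. symmetry. apply H. auto.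
Qed.

Lemma splitU : splitting U V m.
Proof.
  exists (fun u => match u with inl _ => False | inr _ => True end), phi.
  split; [|split; [|split; [|split; [|split; [|split; [|split]]]]]].
  - exists (map copy (seq 0 n)). intros [x|[k Hk]] H. destruct H.
    rewrite <- (copy_eq k Hk). apply in_map. apply in_seq. lia.
  - exists (copy 0). unfold copy. destruct (lt_dec 0 n); exact I.
  - intros [x|k] H. destruct H. split.
    + split. exact I. intros v _ Hv. apply inr_max; auto.
    + apply pos_height_iff. eexists. apply inr_pos.
  - apply phi_mono.
  - intros y. destruct (classic (y = m)) as [E|E].
    + subst. exists (copy 0). unfold copy. destruct (lt_dec 0 n); reflexivity.
    + exists (inl (exist _ y E)). reflexivity.
  - intros [x|k]; simpl; split; auto. intros E. exact (proj2_sig x E). tauto.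
  - intros v Hv. exists (inl (exist _ v Hv)). split; auto.
    intros [x'|k] E; simpl in E. f_equal. apply sig_eq. auto. congruence.
  - intros [x|k] y H; simpl in H.
    + destruct (classic (y = m)) as [E|E].
      * subst. destruct (cover (proj1_sig x)) as [k [Hk HR]]. split; auto.
        exact (proj2_sig x).
        exists (inr (exist _ k Hk)). split; auto.
      * exists (inl (exist _ y E)). split; auto.
    + apply mmax in H. subst. exists (inr k). split; auto. simpl. auto.
Qed.


Definition sv := {x : V | x <> m}.

Lemma lt_below_inl (b : U) (x : sv) : lt U b (inl x) ->
  exists y : sv, b = inl y /\ lt V (proj1_sig y) (proj1_sig x).
Proof.
  intros H. destruct (below_inl b x (proj1 H)) as [y E]. subst. exists y. split; auto.
  apply lt_inl; auto.
Qed.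

Lemma lift_lt (y : V) (x : sv) : lt V y (proj1_sig x) ->
  exists h : y <> m, lt U (inl (exist _ y h)) (inl x).
Proof.
  intros H. assert (h : y <> m) by (eapply ne_below; [apply H| apply proj2_sig]).
  exists h. apply lt_inl. auto.
Qed.

Lemma lift_le (y : V) (x : sv) : le y (proj1_sig x) ->
  exists h : y <> m, @le U (inl (exist _ y h)) (inl x).
Proof.
  intros H. assert (h : y <> m) by (eapply ne_below; [apply H| apply proj2_sig]).
  exists h. simpl. auto.
Qed.

Lemma isMin_inl (x : sv) : isMin U (inl x) <-> isMin V (proj1_sig x).
Proof.
  split.
  - intros H y Hy. destruct (lift_le y x Hy) as [h Hh]. specialize (H _ Hh).
    injection H. intros <-. reflexivity.
  - intros H b Hb. destruct (below_inl b x Hb) as [y E]. subst. f_equal. apply sig_eq.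
    apply H. auto.
Qed.

Lemma inr_notmin (k : {k : nat | k < n}) : ~ isMin U (inr k).
Proof. eapply lt_notmin. apply inr_pos. Qed.

Lemma exlt_inl (x : sv) : (exists b, lt U b (inl x)) <-> (exists y, lt V y (proj1_sig x)).
Proof.
  split.
  - intros [b Hb]. destruct (lt_below_inl b x Hb) as [y [_ H]]. eauto.
  - intros [y Hy]. destruct (lift_lt y x Hy) as [h H]. eauto.
Qed.

Lemma ex2lt_inl (x : sv) : (exists b c, lt U c b /\ lt U b (inl x)) <->
  (exists y z, lt V z y /\ lt V y (proj1_sig x)).
Proof.
  split.
  - intros [b [c [H1 H2]]]. destruct (lt_below_inl b x H2) as [y [E H]]. subst.
    destruct (lt_below_inl c y H1) as [z [E H']]. subst. eauto.
  - intros [y [z [H1 H2]]]. destruct (lift_lt y x H2) as [h H].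
    destruct (lift_lt z (exist _ y h) H1) as [h' H']. eauto.
Qed.

Lemma ht1_inl (x : sv) : ht1 U (inl x) <-> ht1 V (proj1_sig x).
Proof. unfold ht1. rewrite exlt_inl, ex2lt_inl. tauto. Qed.

Lemma ht2_inl (x : sv) : ht2 U (inl x) <-> ht2 V (proj1_sig x).
Proof. unfold ht2. apply ex2lt_inl. Qed.

Lemma twoMin_inl (x : sv) : twoMin U (inl x) <-> twoMin V (proj1_sig x).
Proof.
  split.
  - intros [a [b [H1 [H2 [H3 [H4 H5]]]]]].
    destruct (below_inl a x H4) as [a' E]; subst.
    destruct (below_inl b x H5) as [b' E]; subst.
    rewrite isMin_inl in H2, H3. exists (proj1_sig a'), (proj1_sig b').
    repeat split; auto. intros E. apply H1. f_equal. apply sig_eq. auto.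
  - intros [a [b [H1 [H2 [H3 [H4 H5]]]]]].
    destruct (lift_le a x H4) as [ha Ha]. destruct (lift_le b x H5) as [hb Hb].
    exists (inl (exist _ a ha)), (inl (exist _ b hb)). repeat split; auto.
    + intros E. apply H1. injection E. auto.
    + apply isMin_inl. auto.
    + apply isMin_inl. auto.
Qed.

Lemma Hc_inl (x t : sv) : Hc U (inl x) (inl t) <-> Hc V (proj1_sig x) (proj1_sig t).
Proof. unfold Hc. fold (twoMin U (inl t)). fold (twoMin V (proj1_sig t)).
  rewrite isMin_inl, ht1_inl, twoMin_inl. simpl. tauto. Qed.

Lemma Hs_inl (x t : sv) : Hs U (inl x) (inl t) <-> Hs V (proj1_sig x) (proj1_sig t).
Proof.
  unfold Hs. rewrite Hc_inl. split; intros [H1 H2]; split; auto.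
  - intros E. apply H2. f_equal. apply sig_eq. auto.
  - intros E. apply H2. injection E. intros ->. reflexivity.
Qed.

Lemma Hs_inl_inr (x : sv) k : ~ Hs U (inl x) (inr k).
Proof. intros [[H _] _]. destruct H. Qed.

Lemma Lam_inl (x t : sv) : Lam U (inl x) (inl t) <-> Lam V (proj1_sig x) (proj1_sig t).
Proof.
  unfold Lam. rewrite Hs_inl, ht1_inl.
  assert (E : (exists b, le b (inl x : U) /\ le (inl t : U) b /\ ht1 U b /\ Hs U (inl x) b) <->
              (exists s, le s (proj1_sig x) /\ le (proj1_sig t) s /\ ht1 V s /\ Hs V (proj1_sig x) s)).
  { split.
    - intros [b [H1 [H2 [H3 H4]]]]. destruct (below_inl b x H1) as [s E]; subst.
      rewrite ht1_inl in H3. rewrite Hs_inl in H4. exists (proj1_sig s). auto.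
    - intros [s [H1 [H2 [H3 H4]]]]. destruct (lift_le s x H1) as [h H].
      exists (inl (exist _ s h)). split; auto. split; auto. split.
      apply ht1_inl; auto. apply Hs_inl; auto. }
  rewrite E. tauto.
Qed.

Lemma d_inl (x : sv) : d_is_one V (proj1_sig x) -> d_is_one U (inl x).
Proof.
  rewrite !d_one_iff. intros [s [H1 H2]].
  assert (hs : s <> m).
  { eapply ne_below. destruct H1 as [[_ [[H _] _]]|[[[H _] _] _]]; exact H. apply proj2_sig. }
  exists (inl (exist _ s hs)). split.
  - apply Lam_inl. auto.
  - intros [t|k] Ht.
    + apply Lam_inl in Ht. apply H2 in Ht. f_equal. apply sig_eq. auto.
    + exfalso. destruct Ht as [[_ H]|[H _]]; eapply Hs_inl_inr; eauto.
Qed.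

Lemma Hs_inr (k : {k : nat | k < n}) (b : U) : Hs U (inr k) b ->
  exists t : sv, b = inl t /\ R (proj1_sig t) (proj1_sig k) /\
     (isMin V (proj1_sig t) \/ (ht1 V (proj1_sig t) /\ twoMin V (proj1_sig t))).
Proof.
  intros [[H1 H2] H3]. destruct b as [t|k'].
  - exists t. split; auto. split; auto. fold (twoMin U (inl t)) in H2. rewrite isMin_inl, ht1_inl, twoMin_inl in H2. auto.
  - exfalso. apply H3. f_equal. apply sig_eq. simpl in H1. auto.
Qed.

Lemma Hs_inr_back (k : {k : nat | k < n}) (t : sv) : R (proj1_sig t) (proj1_sig k) ->
  (isMin V (proj1_sig t) \/ (ht1 V (proj1_sig t) /\ twoMin V (proj1_sig t))) ->
  Hs U (inr k) (inl t).
Proof.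
  intros H1 H2. split. split. auto. fold (twoMin U (inl t)). rewrite isMin_inl, ht1_inl, twoMin_inl. auto.
  discriminate.
Qed.

Lemma d_copy (k : {k : nat | k < n}) : d_is_one U (inr k).
Proof.
  apply d_one_iff.
  set (lam := lamOf (proj1_sig k)).
  assert (HL : LamV V m lam) by (apply lamOf_Lam; apply proj2_sig).
  destruct (Lam_cases V m lam HL) as [Hlt [[Ha Hb]|[Ha Hb]]].
  - exists (inl (exist _ lam (proj2 Hlt))).
    assert (HR : R lam (proj1_sig k)) by (split; auto; left; apply le_refl).
    assert (Hw : Hs U (inr k) (inl (exist _ lam (proj2 Hlt)))) by (apply Hs_inr_back; auto).
    split.
    + left. split; auto. apply ht1_inl. auto.
    + intros b Hbl. assert (Hsb : Hs U (inr k) b) by (destruct Hbl as [[_ H]|[H _]]; auto).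
      destruct (Hs_inr k b Hsb) as [t [E [HRt Ht]]]. subst b.
      destruct Ht as [Ht|[Ht1 Ht2]].
      * exfalso. destruct Hbl as [[H _]|[_ H]].
        -- apply ht1_inl in H. destruct H as [[y Hy] _]. eapply min_nlt; eauto.
        -- apply H. exists (inl (exist _ lam (proj2 Hlt))). split. apply HR.
           split. simpl. destruct HRt as [_ [H'|[H' _]]]. auto. exfalso. eapply S1_notmin; eauto.
           split; auto. apply ht1_inl. auto.
      * f_equal. apply sig_eq. simpl. destruct HRt as [_ [H'|[H' _]]].
        -- apply NNPP. intros E. destruct Ht1 as [[y Hy] _]. destruct Ha as [_ Ha]. apply Ha.
           exists (proj1_sig t), y. split; auto. split; auto.
        -- exfalso. eapply S1_not_twoMin; eauto.
  - exists (inl (exist _ lam (proj2 Hlt))).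
    assert (HR : R lam (proj1_sig k)) by (split; auto; left; apply le_refl).
    split.
    + right. split. apply Hs_inr_back; auto.
      intros [b [H1 [H2 [H3 H4]]]]. destruct (Hs_inr k b H4) as [s [E [HRs Hs']]]. subst b.
      apply ht1_inl in H3. apply Hb. exists (proj1_sig s).
      split. apply HRs. split. apply H2. split; auto.
      destruct Hs' as [Hs'|Hs'].
      * exfalso. destruct H3 as [[y Hy] _]. eapply min_nlt; eauto.
      * split. split. apply HRs. right. auto. apply HRs.
    + intros b Hbl. assert (Hsb : Hs U (inr k) b) by (destruct Hbl as [[_ H]|[H _]]; auto).
      destruct (Hs_inr k b Hsb) as [t [E [HRt Ht]]]. subst b.
      f_equal. apply sig_eq. simpl. destruct HRt as [_ [H'|[H' _]]].
      * apply Ha. auto.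
      * exfalso. destruct Ht as [Ht|[_ Ht]]. eapply S1_notmin; eauto.
        eapply S1_not_twoMin; eauto.
Qed.


Lemma fin_image (P Q : poset) (g : P -> Q) (A : Q -> Prop) (B : P -> Prop) :
  finite_set P B -> (forall y, A y -> exists x, B x /\ g x = y) -> finite_set Q A.
Proof.
  intros [lb Hb] H. exists (map g lb). intros y Hy. destruct (H y Hy) as [x [Bx E]].
  subst. apply in_map. auto.
Qed.

Lemma fin_union (P : poset) (A B C : P -> Prop) :
  finite_set P A -> finite_set P B -> (forall x, C x -> A x \/ B x) -> finite_set P C.
Proof.
  intros [la Ha] [lb Hb] H. exists (la ++ lb). intros x Hx. apply in_or_app.
  destruct (H x Hx); auto.
Qed.

Lemma fin_sub (P : poset) (A B : P -> Prop) :
  finite_set P A -> (forall x, B x -> A x) -> finite_set P B.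
Proof. intros [la Ha] H. exists la. auto. Qed.

Lemma fin_copies : finite_set U (fun u => match u with inl _ => False | inr _ => True end).
Proof.
  exists (map copy (seq 0 n)). intros [x|[k Hk]] H. destruct H.
  rewrite <- (copy_eq k Hk). apply in_map. apply in_seq. lia.
Qed.

Lemma psi_sv (x : sv) : psi (proj1_sig x) = inl x.
Proof. destruct x as [x h]. apply psi_inl. Qed.

Lemma fin_inl (A : U -> Prop) (B : V -> Prop) : finite_set V B ->
  (forall x : sv, A (inl x) -> B (proj1_sig x)) -> finite_set U A.
Proof.
  intros HB H. apply (fin_union U (fun u => exists x, B x /\ psi x = u)
    (fun u => match u with inl _ => False | inr _ => True end)).
  - apply (fin_image V U psi _ B HB). auto.
  - apply fin_copies.
  - intros [x|k] Hx. left. exists (proj1_sig x). split; auto. apply psi_sv. right. exact I.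
Qed.

Lemma dim2U : dim2 U.
Proof.
  intros C. apply chain3_all in C. destruct C as [a0 [a1 [a2 [a3 [H1 [H2 H3]]]]]].
  apply (dim2_no3 V D (phi a0) (phi a1) (phi a2) (phi a3)); apply phi_strict; auto.
Qed.

Lemma minU (u : U) : isMin U u -> exists x : sv, u = inl x /\ isMin V (proj1_sig x).
Proof.
  intros H. destruct u as [x|k]. exists x. split; auto. apply isMin_inl; auto.
  exfalso. eapply inr_notmin; eauto.
Qed.

Lemma lt_inr_inv (k : {k : nat | k < n}) (b : U) : lt U b (inr k) ->
  exists y : sv, b = inl y /\ R (proj1_sig y) (proj1_sig k).
Proof.
  intros [H1 H2]. destruct b as [y|k']. eauto. exfalso. apply H2. f_equal. apply sig_eq.
  simpl in H1. auto.
Qed.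

Lemma slash_inl (x z t : sv) :
  slash U (inl x) (inl z) (inl t) <-> slash V (proj1_sig x) (proj1_sig z) (proj1_sig t).
Proof.
  rewrite !slash_iff. split.
  - intros [[H1 H2] [H3 H4]]. apply lt_inl in H1. apply lt_inl in H3.
    split; split; auto.
    + intros s Hs. destruct (classic (s = m)) as [E|E].
      * subst. destruct (cover (proj1_sig t) Hs) as [k [Hk HR]].
        assert (Hlt : lt U (inl t) (inr (exist _ k Hk))) by (split; [exact HR | discriminate]).
        specialize (H2 _ Hlt). discriminate.
      * specialize (H2 (inl (exist _ s E)) (proj2 (lt_inl t (exist _ s E)) Hs)).
        injection H2. intros <-. reflexivity.
    + intros s Hs. destruct (lift_lt s t Hs) as [h Hh]. specialize (H4 _ Hh).
      injection H4. intros <-. reflexivity.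
  - intros [[H1 H2] [H3 H4]]. split; split.
    + apply lt_inl. auto.
    + intros [s|k] Hs.
      * apply lt_inl in Hs. f_equal. apply sig_eq. auto.
      * exfalso. destruct Hs as [[Hs _] _]. apply (proj2_sig x). symmetry. apply H2. auto.
    + apply lt_inl. auto.
    + intros s Hs. destruct (lt_below_inl s t Hs) as [s' [E Hs']]. subst.
      f_equal. apply sig_eq. auto.
Qed.

Lemma slash_not_inr (u w : U) k : ~ slash U u w (inr k).
Proof.
  intros H. apply slash_iff in H. destruct H as [[[H1 H2] _] _].
  destruct u as [x|k']. destruct H1. apply H2. f_equal. apply sig_eq. simpl in H1. auto.
Qed.

Lemma slash_m_notLam z t : slash V m z t -> ~ LamV V m t.
Proof.
  intros H HL. apply slash_iff in H. destruct H as [[H1 H2] [H3 H4]].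
  destruct (Lam_cases V m t HL) as [_ [[_ [a [b [Hab [Ha [Hb [Ha' Hb']]]]]]]|[Hm _]]].
  - apply Hab. assert (Ea : a = z).
    { apply H4. split; auto. intros E. rewrite E in Ha. exact (min_nlt V t z Ha H3). }
    assert (Eb : b = z).
    { apply H4. split; auto. intros E. rewrite E in Hb. exact (min_nlt V t z Hb H3). }
    congruence.
  - exact (min_nlt V t z Hm H3).
Qed.

Lemma slash_m_S1 z t : slash V m z t -> S1 V m t.
Proof.
  intros H. split. apply slash_iff in H. apply H.
  intros [l0 [L1 L2]]. apply (slash_m_notLam z t H).
  destruct (classic (t = l0)) as [E|E]. subst; auto.
  exfalso. apply slash_iff in H. destruct H as [[_ H] _].
  apply (proj2 (Lam_lt V m l0 L1)). apply H. split; auto.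
Qed.

Lemma slash_inr (k : {k : nat | k < n}) (z t : sv) :
  slash U (inr k) (inl z) (inl t) <->
  slash V m (proj1_sig z) (proj1_sig t) /\ sel (proj1_sig t) = lamOf (proj1_sig k).
Proof.
  split.
  - intros H. rewrite slash_iff in H. destruct H as [[H1 H2] [H3 H4]].
    assert (HV : slash V m (proj1_sig z) (proj1_sig t)).
    { apply slash_iff. split; split.
      - apply H1.
      - intros s Hs. apply NNPP. intros E.
        specialize (H2 (inl (exist _ s E)) (proj2 (lt_inl t (exist _ s E)) Hs)). discriminate.
      - apply lt_inl. auto.
      - intros s Hs. destruct (lift_lt s t Hs) as [h Hh]. specialize (H4 _ Hh).
        injection H4. intros <-. reflexivity. }
    split; auto. destruct H1 as [[_ [H1|[_ H1]]] _]; auto.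
    exfalso. apply (slash_m_notLam _ _ HV).
    destruct (classic (proj1_sig t = lamOf (proj1_sig k))) as [E|E].
    + rewrite E. apply lamOf_Lam. apply proj2_sig.
    + apply slash_iff in HV. destruct HV as [[_ HV] _].
      exfalso. apply (proj2 (Lam_lt V m _ (lamOf_Lam _ (proj2_sig k)))). apply HV. split; auto.
  - intros [HV Hs]. assert (HS := slash_m_S1 _ _ HV).
    apply slash_iff in HV. destruct HV as [[H1 H2] [H3 H4]].
    apply slash_iff. split; split.
    + split. split; auto. discriminate.
    + intros [s|k'] Hs'.
      * exfalso. apply lt_inl in Hs'. apply (proj2_sig s). apply H2. auto.
      * f_equal. apply sig_eq. destruct Hs' as [[_ [Hl|[_ Hl]]] _].
        -- exfalso. apply (proj2 HS). exists (lamOf (proj1_sig k')). split; auto.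
           apply lamOf_Lam. apply proj2_sig.
        -- apply lamOf_inj; try apply proj2_sig. congruence.
    + apply lt_inl. auto.
    + intros s Hs'. destruct (lt_below_inl s t Hs') as [s' [E Hs'']]. subst.
      f_equal. apply sig_eq. auto.
Qed.

Lemma inj_fin {X Y : Type} (i : X -> Y) (Hi : injf i) : forall (la : list Y) (S : X -> Prop),
  (forall v, S v -> In (i v) la) -> exists lv, forall v, S v -> In v lv.
Proof.
  induction la as [|a la IH]; intros S H.
  - exists nil. intros v Hv. apply H in Hv. destruct Hv.
  - destruct (IH (fun v => S v /\ i v <> a)) as [lv Hlv].
    { intros v [Hv E]. destruct (H v Hv); auto. congruence. }
    destruct (classic (exists v0, i v0 = a)) as [[v0 E]|N].
    + exists (v0 :: lv). intros v Hv. destruct (classic (i v = a)) as [E'|E'].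
      * left. apply Hi. congruence.
      * right. auto.
    + exists lv. intros v Hv. apply Hlv. split; auto. intros E. apply N. eauto.
Qed.

Lemma big_infinite (F B : V -> Prop) : big F -> ~ finite_set V B -> ~ finite_set V F.
Proof.
  intros [i [Hi Hr]] HB [lf Hf]. apply HB.
  destruct (inj_fin i Hi lf (fun _ => True)) as [lv Hlv].
  { intros v _. apply Hf. apply Hr. eauto. }
  exists lv. intros x _. apply Hlv. exact I.
Qed.

Lemma nonempty_of_inf (P : poset) (A : P -> Prop) : ~ finite_set P A -> exists x, A x.
Proof.
  intros H. apply NNPP. intros N. apply H. exists nil. intros x Hx. apply N. eauto.
Qed.

Hypothesis KV : proper_K_poset V.
Hypothesis selB : forall c l0, LamV V m l0 -> le c l0 -> (exists x, slash V m c x) ->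
  big (fun x => slash V m c x /\ sel x = l0).

Lemma KU : K_poset U.
Proof.
  destruct KV as [[_ [[lmin Hmin] [[lh2 Hh2] [Hmub Hinf]]]] _].
  split; [|split; [|split; [|split]]].
  - apply dim2U.
  - apply (fin_inl _ (minimal_in V (allP V))). exists lmin; auto.
    intros x Hx. apply minimal_all. apply minimal_all in Hx. apply isMin_inl; auto.
  - apply (fin_inl _ (fun v => height_in V (allP V) v 2)). exists lh2; auto.
    intros x Hx. apply height2_all; auto. apply height2_all in Hx. apply ht2_inl; auto.
    apply dim2U.
  - intros u v Hu Hv Huv. apply minimal_all in Hu, Hv.
    destruct (minU u Hu) as [a [E Ha]]. destruct (minU v Hv) as [b [E' Hb]]. subst.
    apply (fin_inl _ (mub2 V (proj1_sig a) (proj1_sig b))).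
    + apply Hmub. apply minimal_all; auto. apply minimal_all; auto.
      intros E. apply Huv. f_equal. apply sig_eq. auto.
    + intros x [H1 [H2 H3]]. split; auto. split; auto.
      intros w' W1 W2 W3. destruct (lift_le w' x W3) as [h Hh].
      specialize (H3 (inl (exist _ w' h)) W1 W2 Hh). injection H3. intros <-. reflexivity.
  - intros u v w Hvu Hwv. destruct u as [x|k].
    + destruct (lt_below_inl v x Hvu) as [y [E Hy]]. subst.
      destruct (lt_below_inl w y Hwv) as [z [E Hz]]. subst.
      intros HF. apply (Hinf (proj1_sig x) (proj1_sig y) (proj1_sig z) Hy Hz).
      apply (fin_image U V phi _ _ HF). intros t Ht.
      assert (h : t <> m).
      { apply slash_iff in Ht. destruct Ht as [[[Ht _] _] _]. eapply ne_below. exact Ht. apply proj2_sig. }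
      exists (inl (exist _ t h)). split; auto. apply slash_inl. auto.
    + destruct (lt_inr_inv k v Hvu) as [y [E HRy]]. subst.
      destruct (lt_below_inl w y Hwv) as [z [E Hz]]. subst.
      assert (Hinfm := Hinf m (proj1_sig y) (proj1_sig z) (proj1 HRy) Hz).
      assert (Hzl : le (proj1_sig z) (lamOf (proj1_sig k))).
      { destruct (R_down (proj1_sig z) (proj1_sig y) (proj1_sig k) HRy (proj1 Hz)) as [_ [H|[H _]]].
        auto. exfalso. apply (S1_notmin V m _ H). apply (below_min V m D (proj1_sig y) (proj1_sig z) (proj1 HRy) Hz). }
      assert (Hbig := selB (proj1_sig z) _ (lamOf_Lam _ (proj2_sig k)) Hzl
                       (nonempty_of_inf _ _ Hinfm)).
      intros HF. apply (big_infinite _ _ Hbig Hinfm).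
      apply (fin_image U V phi _ _ HF). intros t [Ht Hs].
      assert (h : t <> m).
      { apply slash_iff in Ht. destruct Ht as [[[_ Ht] _] _]. auto. }
      exists (inl (exist _ t h)). split; auto. apply slash_inr. auto.
Qed.


Fixpoint it (f : V -> V) (k : nat) (x : V) : V :=
  match k with 0 => x | S k => f (it f k x) end.

Lemma it_add f a b x : it f (a + b) x = it f a (it f b x).
Proof. induction a; simpl; congruence. Qed.

Lemma it_inj f k : injf f -> injf (it f k).
Proof. intros Hf. induction k; intros a b E; simpl in *; auto. Qed.

Lemma it_pos_ne f u0 d x : (forall v, f v <> u0) -> it f (S d) x <> u0.
Proof. intros H. simpl. apply H. Qed.

Lemma equiVU : (exists f : V -> V, injf f /\ exists u0, forall v, f v <> u0) -> equi V U.
Proof.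
  intros [f [Hf [u0 Hu0]]]. apply equi_sym.
  apply (SB U V (fun u => match u with
                          | inl x => it f n (proj1_sig x)
                          | inr k => it f (proj1_sig k) u0 end) psi).
  - assert (orb : forall i j, it f i u0 = it f j u0 -> i = j).
    { intros i j E. destruct (Nat.lt_trichotomy i j) as [H|[H|H]]; auto; exfalso.
      - replace j with (i + (j - i)) in E by lia. rewrite it_add in E.
        apply (it_inj f i Hf) in E. destruct (j - i) eqn:Ed; [lia|].
        symmetry in E. apply (it_pos_ne f u0 n0 u0 Hu0 E).
      - replace i with (j + (i - j)) in E by lia. rewrite it_add in E.
        apply (it_inj f j Hf) in E. destruct (i - j) eqn:Ed; [lia|].
        apply (it_pos_ne f u0 n0 u0 Hu0 E). }
    intros [x|[k Hk]] [y|[k' Hk']] E.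
    + f_equal. apply sig_eq. eapply it_inj; eauto.
    + exfalso. simpl in E. replace n with (k' + (n - k')) in E by lia. rewrite it_add in E.
      apply (it_inj f k' Hf) in E. destruct (n - k') eqn:Ed; [lia|].
      apply (it_pos_ne f u0 n0 _ Hu0 E).
    + exfalso. simpl in E. replace n with (k + (n - k)) in E by lia. rewrite it_add in E.
      apply (it_inj f k Hf) in E. destruct (n - k) eqn:Ed; [lia|].
      symmetry in E. apply (it_pos_ne f u0 n0 _ Hu0 E).
    + f_equal. apply sig_eq. simpl. apply orb. auto.
  - intros a b E. destruct (classic (a = m)) as [Ea|Ea]; destruct (classic (b = m)) as [Eb|Eb].
    + congruence.
    + exfalso. subst. rewrite (psi_inl b Eb) in E. unfold psi in E.
      destruct (excluded_middle_informative (m = m)); [|congruence].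
      unfold copy in E. destruct (lt_dec 0 n); discriminate.
    + exfalso. subst. rewrite (psi_inl a Ea) in E. unfold psi in E.
      destruct (excluded_middle_informative (m = m)); [|congruence].
      unfold copy in E. destruct (lt_dec 0 n); discriminate.
    + rewrite (psi_inl a Ea), (psi_inl b Eb) in E. injection E. auto.
Qed.

Lemma equi_from_slash x z : (forall y, le x y -> y = x) -> isMin V z ->
  (exists t, slash V x z t) -> equi V U /\ equi {t | slash V x z t} V.
Proof.
  intros Hx Hz [t0 Ht0]. destruct KV as [_ KP].
  destruct (KP x z) as [E|E].
  - split. exact I. intros v _ Hv. apply Hx. auto.
  - apply minimal_all. auto.
  - exfalso. apply (E t0 Ht0).
  - assert (E' : equi {t | slash V x z t} V) by exact E. split; auto.
    apply equiVU. destruct (equi_big _ E') as [i [Hi Hr]]. exists i. split; auto.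
    exists x. intros v Ev. assert (Hs : slash V x z x) by (apply Hr; eauto).
    apply slash_iff in Hs. destruct Hs as [[Hs _] _]. eapply lt_irrefl; eauto.
Qed.

Lemma equi_inl (A : U -> Prop) (B : V -> Prop) :
  (forall k, ~ A (inr k)) -> (forall t, B t -> t <> m) ->
  (forall t : sv, A (inl t) <-> B (proj1_sig t)) -> equi {u | A u} {t | B t}.
Proof.
  intros H1 H2 H3. apply (equi_map phi).
  - intros [x|k] Hx. apply H3; auto. exfalso; eapply H1; eauto.
  - intros [a|k] [b|k'] Ha Hb E; try (exfalso; eapply H1; eauto; fail).
    f_equal. apply sig_eq. auto.
  - intros t Ht. exists (inl (exist _ t (H2 t Ht))). split; auto. apply H3. auto.
Qed.

Lemma properU : proper_K_poset U.
Proof.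
  split. apply KU.
  intros u w Hu Hw. apply minimal_all in Hw. destruct (minU w Hw) as [z [E Hz]]. subst w.
  destruct u as [x|k].
  - assert (Hx : forall y, le (proj1_sig x) y -> y = proj1_sig x).
    { apply inl_max. intros b Hb. destruct Hu as [_ Hu]. apply Hu; auto. exact I. }
    destruct (classic (exists t, slash V (proj1_sig x) (proj1_sig z) t)) as [Ne|Em].
    + right. destruct (equi_from_slash _ _ Hx Hz Ne) as [EVU E2].
      change (equi {u | slash U (inl x) (inl z) u} U).
      eapply equi_trans; [|eapply equi_trans; [exact E2|exact EVU]].
      apply equi_inl.
      * apply slash_not_inr.
      * intros t Ht E. subst. apply slash_iff in Ht. destruct Ht as [[Ht _] _].
        apply (proj2_sig x). apply mmax. apply Ht.
      * intros t. apply slash_inl.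
    + left. intros [t|k] Ht. apply slash_inl in Ht. eauto. eapply slash_not_inr; eauto.
  - set (B := fun t => slash V m (proj1_sig z) t /\ sel t = lamOf (proj1_sig k)).
    destruct (classic (exists t, B t)) as [[t0 [Ht0 Hs0]]|Em].
    + right. destruct (equi_from_slash m (proj1_sig z) mmax Hz (ex_intro _ t0 Ht0)) as [EVU _].
      assert (Hzl : le (proj1_sig z) (lamOf (proj1_sig k))).
      { rewrite <- Hs0. apply (proj2 (selS t0 (slash_m_S1 _ _ Ht0))).
        apply slash_iff in Ht0. apply Ht0. }
      assert (Hb := selB _ _ (lamOf_Lam _ (proj2_sig k)) Hzl (ex_intro _ t0 Ht0)).
      change (equi {u | slash U (inr k) (inl z) u} U).
      apply (equi_trans _ {t | B t} _); [| apply (equi_trans _ V _); [apply big_equi; exact Hb | exact EVU]].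
      apply equi_inl.
      * apply slash_not_inr.
      * intros t [Ht _]. apply slash_iff in Ht. apply Ht.
      * intros t. apply slash_inr.
    + left. intros [t|k'] Ht. apply slash_inr in Ht. apply Em. eauto.
      eapply slash_not_inr; eauto.
Qed.

Definition bad (P : poset) (x : P) :=
  maximal_in P (allP P) x /\ pos_height_in P (allP P) x /\ ~ d_is_one P x.

Lemma bad_transfer (u : U) : bad U u -> exists v, bad V v /\ v <> m /\ psi v = u.
Proof.
  intros [H1 [H2 H3]]. destruct u as [x|k].
  - exists (proj1_sig x). split; [|split; [apply proj2_sig|apply psi_sv]].
    split; [|split].
    + split. exact I. intros v _ Hv. apply (proj1 (inl_max x)); auto.
      intros b Hb. apply H1; auto. exact I.
    + apply pos_height_iff. apply exlt_inl. apply pos_height_iff. auto.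
    + intros H. apply H3. apply d_inl. auto.
  - exfalso. apply H3. apply d_copy.
Qed.

End Split.

Section Final.

Lemma fin_bigunion (P : poset) (I : Type) (li : list I) (B : I -> P -> Prop) :
  (forall a, In a li -> finite_set P (B a)) ->
  finite_set P (fun x => exists a, In a li /\ B a x).
Proof.
  induction li as [|a li IH]; intros H.
  - exists nil. intros x [a [[] _]].
  - destruct (H a (or_introl eq_refl)) as [la Ha].
    destruct IH as [lr Hr]. intros b Hb. apply H. right; auto.
    exists (la ++ lr). intros x [b [[E|Hb] Hx]]; apply in_or_app.
    + subst. left; auto.
    + right. apply Hr. eauto.
Qed.

Variable V : poset.
Hypothesis KV : proper_K_poset V.

Lemma KV_dim : dim2 V.
Proof. apply KV. Qed.

Lemma fin_mubs : finite_set V (fun x => exists a b, isMin V a /\ isMin V b /\ a <> b /\ mub2 V a b x).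
Proof.
  destruct KV as [[_ [[lmin Hmin] [_ [Hmub _]]]] _].
  eapply fin_sub.
  - apply (fin_bigunion V V lmin (fun a x => exists b, In b lmin /\ isMin V a /\ isMin V b /\ a <> b /\ mub2 V a b x)).
    intros a Ha. eapply fin_sub.
    + apply (fin_bigunion V V lmin (fun b x => isMin V a /\ isMin V b /\ a <> b /\ mub2 V a b x)).
      intros b Hb. destruct (classic (isMin V a /\ isMin V b /\ a <> b)) as [[H1 [H2 H3]]|N].
      * apply (fin_sub V (mub2 V a b)). apply Hmub; [apply minimal_all; exact H1|apply minimal_all; exact H2|exact H3].
        intros x Hx; apply Hx.
      * exists nil. intros x Hx. exfalso. apply N. tauto.
    + intros x [b [Hb Hx]]. exists b. auto.
  - intros x [a [b [Ha [Hb [Hab Hx]]]]]. exists a. split.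
    apply Hmin. apply minimal_all. auto. exists b. split; auto.
    apply Hmin. apply minimal_all. auto.
Qed.

Lemma ht1_twoMin_mub v : ht1 V v -> twoMin V v ->
  exists a b, isMin V a /\ isMin V b /\ a <> b /\ mub2 V a b v.
Proof.
  intros H1 [a [b [Hab [Ha [Hb [Ha' Hb']]]]]]. exists a, b. repeat split; auto.
  intros w' W1 W2 W3. apply NNPP. intros E.
  assert (Hw : lt V w' v) by (split; auto).
  assert (Mw : isMin V w').
  { apply NNPP. intros N. destruct (notmin_lt V w' N) as [y Hy]. apply (proj2 H1). eauto. }
  apply Hab. rewrite (Mw a W1), (Mw b W2). auto.
Qed.

Lemma fin_Lam m : finite_set V (LamV V m).
Proof.
  destruct KV as [[_ [[lmin Hmin] _]] _].
  apply (fin_union V _ _ _ (ex_intro _ lmin Hmin) fin_mubs).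
  intros x Hx. destruct (Lam_cases V m x Hx) as [_ [[H1 H2]|[H1 _]]].
  - right. apply ht1_twoMin_mub; auto.
  - left. apply minimal_all. auto.
Qed.

Lemma list_exact (A : V -> Prop) : finite_set V A ->
  exists l, NoDup l /\ forall v, A v <-> In v l.
Proof.
  intros [l0 H0].
  set (dec := fun x y : V => excluded_middle_informative (x = y)).
  set (f := fun v => if excluded_middle_informative (A v) then true else false).
  exists (nodup dec (filter f l0)). split. apply NoDup_nodup.
  intros v. rewrite nodup_In, filter_In. unfold f.
  destruct (excluded_middle_informative (A v)); split; intros H; try tauto; try discriminate.
  split; auto. destruct H; discriminate.
Qed.

Lemma ht1_unique_d v : ht1 V v -> ~ twoMin V v -> d_is_one V v.
Proof.
  intros H1 H2. apply d_one_iff.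
  destruct (exists_min V KV_dim v) as [c [Hc1 Hc2]].
  assert (Hcv : c <> v).
  { intros E. subst. destruct H1 as [[y Hy] _]. eapply min_nlt; eauto. }
  assert (below : forall t, lt V t v -> isMin V t).
  { intros t Ht. apply NNPP. intros N. destruct (notmin_lt V t N) as [y Hy]. apply (proj2 H1). eauto. }
  exists c. split.
  - right. split. split. split; auto. auto.
    intros [x [X1 [X2 [X3 [[X4 _] X5]]]]]. destruct X3 as [[y Hy] _].
    apply (proj2 H1). exists x, y. split; auto. split; auto.
  - intros t Ht. assert (Hs : Hs V v t) by (destruct Ht as [[_ H]|[H _]]; auto).
    destruct Hs as [[Ht1 _] Ht2].
    assert (Mt : isMin V t) by (apply below; split; auto).
    apply NNPP. intros E. apply H2. exists t, c. repeat split; auto.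
Qed.

Lemma fin_bad : finite_set V (bad V).
Proof.
  destruct KV as [[_ [_ [[lh2 Hh2] _]]] _].
  apply (fin_union V _ _ _ (ex_intro _ lh2 Hh2) fin_mubs).
  intros v [H1 [H2 H3]]. destruct (classic (ht2 V v)) as [E|E].
  - left. apply height2_all. apply KV_dim. auto.
  - right. apply pos_height_iff in H2.
    assert (Hv : ht1 V v) by (split; auto).
    apply ht1_twoMin_mub; auto. apply NNPP. intros N. apply H3. apply ht1_unique_d; auto.
Qed.

Variable m : V.
Hypothesis mmaxI : maximal_in V (allP V) m.
Hypothesis mposI : pos_height_in V (allP V) m.

Lemma mmax : forall y, le m y -> y = m.
Proof. intros y H. apply mmaxI. exact I. auto. Qed.

Lemma mpos : exists y, lt V y m.
Proof. apply pos_height_iff. auto. Qed.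

Lemma slash_big c : isMin V c -> (exists x, slash V m c x) -> big (slash V m c).
Proof.
  intros Hc [x Hx]. destruct KV as [_ KP]. destruct (KP m c mmaxI) as [E|E].
  apply minimal_all; auto. exfalso; eapply E; eauto. apply equi_big. exact E.
Qed.

Definition bdec (P : V -> Prop) (v : V) : bool :=
  if excluded_middle_informative (P v) then true else false.

Lemma bdec_true P v : bdec P v = true <-> P v.
Proof. unfold bdec. destruct (excluded_middle_informative (P v)); split; auto; try discriminate; tauto. Qed.

Lemma claim (l : list V) (lND : NoDup l) (lSpec : forall v, LamV V m v <-> In v l)
  c : isMin V c -> lt V c m ->
  exists q : V -> V, (forall x, LamV V m (q x) /\ le c (q x)) /\
    ((exists x, slash V m c x) -> forall l0, LamV V m l0 -> le c l0 ->
        big (fun x => slash V m c x /\ q x = l0)).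
Proof.
  intros Hc Hcm.
  set (C := filter (bdec (le c)) l).
  assert (HC : forall v, In v C <-> LamV V m v /\ le c v).
  { intros v. unfold C. rewrite filter_In, bdec_true, lSpec. tauto. }
  assert (ND : NoDup C) by (apply NoDup_filter; auto).
  destruct (min_covered V m c Hcm Hc) as [l1 Hl1].
  destruct C as [|l0 rest] eqn:EC. { apply HC in Hl1. destruct Hl1. }
  destruct (classic ((exists x, slash V m c x) /\ rest <> nil)) as [[Ne Hr]|N].
  -
    destruct rest as [|l2 rest']. congruence.
    assert (H0 := proj1 (HC l0) (or_introl eq_refl)).
    assert (H2 := proj1 (HC l2) (or_intror (or_introl eq_refl))).
    assert (N02 : l0 <> l2) by (inversion ND; subst; intros E; subst; simpl in *; tauto).
    assert (exists h, LamV V m h /\ le c h /\ ~ isMin V h) as [h [Hh1 [Hh2 Hh3]]].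
    { destruct (classic (isMin V l0)) as [M0|M0]; [|exists l0; tauto].
      destruct (classic (isMin V l2)) as [M2|M2]; [|exists l2; tauto].
      exfalso. apply N02. rewrite <- (M0 c (proj2 H0)), <- (M2 c (proj2 H2)). auto. }
    destruct (Lam_cases V m h Hh1) as [Hhm [[Ht1 [a [b [Hab [Ha [Hb [Ha' Hb']]]]]]]|[M _]]];
      [|tauto].
    assert (exists c', isMin V c' /\ c' <> c /\ le c' h) as [c' [Hc'1 [Hc'2 Hc'3]]].
    { destruct (classic (a = c)) as [E|E]. exists b. split; auto. split; auto. congruence.
      exists a. auto. }
    assert (Hc'h : lt V c' h) by (split; auto; intros E; subst; tauto).
    assert (Hinf := proj2 (proj2 (proj2 (proj2 (proj1 KV)))) m h c' Hhm Hc'h).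
    assert (B1 := slash_big c Hc Ne).
    assert (B2 := slash_big c' Hc'1 (nonempty_of_inf V _ Hinf)).
    assert (dis : forall x, slash V m c x -> slash V m c' x -> False).
    { intros x X1 X2. apply slash_iff in X1. apply slash_iff in X2. apply Hc'2.
      destruct X1 as [_ [_ X1]]. destruct X2 as [_ [X2 _]]. apply X1. auto. }
    destruct (double_from_two _ _ dis B1 B2) as [e [ei es]].
    destruct B1 as [i [ii ir]].
    destruct (partition_big e ei es (l0 :: l2 :: rest') ND ltac:(discriminate) i ii)
      as [q [Hq1 Hq2]].
    exists q. split.
    + intros x. apply HC. auto.
    + intros _ l3 L1 L2. eapply big_ext; [|apply (Hq2 l3); apply HC; auto].
      intros x. simpl. rewrite <- ir. tauto.
  - exists (fun _ => l0). split.
    + intros _. apply HC. left; auto.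
    + intros Ne l3 L1 L2. destruct rest as [|? ?]; [|exfalso; apply N; split; auto; discriminate].
      assert (E : l3 = l0) by (destruct (proj2 (HC l3) (conj L1 L2)) as [E|[]]; auto).
      subst l3. eapply big_ext; [|apply (slash_big c Hc Ne)]. intros x. tauto.
Qed.

End Final.

Lemma step (V : poset) (KV : proper_K_poset V) (m : V)
  (mmaxI : maximal_in V (allP V) m) (mposI : pos_height_in V (allP V) m) :
  exists (U : poset) (ps : V -> U), splitting U V m /\ proper_K_poset U /\
    forall u, bad U u -> exists v, bad V v /\ v <> m /\ ps v = u.
Proof.
  assert (Dm := KV_dim V KV). assert (mm := mmax V m mmaxI). assert (mp := mpos V m mposI).
  destruct (list_exact V (LamV V m) (fin_Lam V KV m)) as [l [lND lSpec]].
  assert (HQ : exists Q : V -> V -> V, forall c, isMin V c -> lt V c m ->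
    (forall x, LamV V m (Q c x) /\ le c (Q c x)) /\
    ((exists x, slash V m c x) -> forall l0, LamV V m l0 -> le c l0 ->
        big (fun x => slash V m c x /\ Q c x = l0))).
  { exists (fun c => match excluded_middle_informative (isMin V c /\ lt V c m) with
             | left h => proj1_sig (constructive_indefinite_description _
                           (claim V KV m mmaxI l lND lSpec c (proj1 h) (proj2 h)))
             | right _ => fun x => x end).
    intros c H1 H2. destruct (excluded_middle_informative (isMin V c /\ lt V c m)) as [h|h].
    - destruct (constructive_indefinite_description _ _) as [q Hq]. exact Hq.
    - tauto. }
  destruct HQ as [Q HQ].
  assert (HM : exists mo : V -> V, forall x, (exists z, lt V z x) -> lt V (mo x) x).
  { exists (fun x => match excluded_middle_informative (exists z, lt V z x) with
             | left h => proj1_sig (constructive_indefinite_description _ h)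
             | right _ => x end).
    intros x H. destruct (excluded_middle_informative (exists z, lt V z x)) as [h|h]; [|tauto].
    destruct (constructive_indefinite_description _ _) as [z Hz]. exact Hz. }
  destruct HM as [mo Hmo].
  set (sel := fun x => Q (mo x) x).
  assert (selS : forall x, S1 V m x -> LamV V m (sel x) /\ forall z, lt V z x -> le z (sel x)).
  { intros x HS. destruct (S1_unique V m Dm x HS) as [c [Hc1 [Hc2 Hc3]]].
    assert (E : mo x = c) by (apply Hc3; apply Hmo; eauto).
    assert (Hcm : lt V c m) by (eapply lt_trans'; [exact Hc1|apply HS]).
    unfold sel. rewrite E. destruct (HQ c Hc2 Hcm) as [H1 _]. split. exact (proj1 (H1 x)).
    intros z Hz. rewrite (Hc3 z Hz). exact (proj2 (H1 x)). }
  assert (selB : forall c l0, LamV V m l0 -> le c l0 -> (exists x, slash V m c x) ->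
     big (fun x => slash V m c x /\ sel x = l0)).
  { intros c l0 L1 L2 [x Hx].
    assert (Hx' := Hx). apply slash_iff in Hx'. destruct Hx' as [[Hxm _] [Hcx _]].
    assert (Hcm : lt V c m) by exact (lt_trans' V c x m Hcx Hxm).
    assert (Hc : isMin V c) by exact (below_min V m Dm x c Hxm Hcx).
    eapply big_ext; [|apply (proj2 (HQ c Hc Hcm)); eauto].
    intros t. split; intros [Ht E]; split; auto; unfold sel in *;
      assert (Emo : mo t = c) by
        (apply slash_iff in Ht; destruct Ht as [_ [Ht1 Ht2]]; apply Ht2; apply Hmo; eauto);
      rewrite Emo in *; auto. }
  exists (U V m l sel selS), (psi V m Dm mp l lND lSpec sel selS).
  split; [|split].
  - apply splitU; auto.
  - apply properU; auto.
  - intros u Hu. apply bad_transfer; auto.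
Qed.

Lemma remove_one {X : Type} (l : list X) v : In v l ->
  exists l', length l' < length l /\ forall w, In w l -> w <> v -> In w l'.
Proof.
  induction l as [|a l IH]; intros H. destruct H.
  destruct (classic (a = v)) as [E|E].
  - exists l. split. simpl; lia. intros w [Hw|Hw] Hne; [congruence|auto].
  - destruct H as [H|H]; [congruence|]. destruct (IH H) as [l' [L1 L2]].
    exists (a :: l'). split. simpl; lia. intros w [Hw|Hw] Hne. left; auto. right; auto.
Qed.

Definition concl (V : poset) : Prop :=
  exists (l : nat) (Vs : nat -> poset),
    Vs 0 = V /\
    (forall i, i <= l -> proper_K_poset (Vs i)) /\
    (forall i, i < l ->
       exists n : Vs i,
         maximal_in (Vs i) (allP (Vs i)) n /\
         pos_height_in (Vs i) (allP (Vs i)) n /\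
         splitting (Vs (S i)) (Vs i) n) /\
    simple (Vs l).

Lemma main_ind N : forall V : poset, proper_K_poset V ->
  (exists lb : list V, length lb <= N /\ forall v, bad V v -> In v lb) -> concl V.
Proof.
  induction N as [|N IH]; intros V KV [lb [Hlen Hlb]].
  - exists 0, (fun _ => V). split; auto. split. intros; auto. split. intros; lia.
    split; auto. intros m H1 H2. apply NNPP. intros H3.
    destruct lb; [|simpl in Hlen; lia]. apply (Hlb m). split; auto.
  - destruct (classic (exists v, bad V v)) as [[v Hv]|Nb].
    + destruct Hv as [Hv1 [Hv2 Hv3]].
      destruct (step V KV v Hv1 Hv2) as [U [ps [Hs [KU Hb]]]].
      destruct (remove_one lb v (Hlb v (conj Hv1 (conj Hv2 Hv3)))) as [lb' [L1 L2]].
      destruct (IH U KU) as [lU [VsU [E0 [P1 [P2 P3]]]]].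
      { exists (map ps lb'). split. rewrite length_map. lia.
        intros u Hu. destruct (Hb u Hu) as [w [Hw1 [Hw2 Hw3]]]. subst. apply in_map.
        apply L2; auto. }
      exists (S lU), (fun i => match i with 0 => V | S j => VsU j end).
      split; auto. split; [|split].
      * intros [|i] Hi; auto. apply P1. lia.
      * intros [|i] Hi.
        -- exists v. split; auto. split; auto. simpl. rewrite E0. auto.
        -- apply P2. lia.
      * auto.
    + exists 0, (fun _ => V). split; auto. split. intros; auto. split. intros; lia.
      split; auto. intros m H1 H2. apply NNPP. intros H3. apply Nb. exists m. split; auto.
Qed.

Theorem theorem5p6 (V : poset) :
  proper_K_poset V ->
  exists (l : nat) (Vs : nat -> poset),
    Vs 0 = V /\
    (forall i, i <= l -> proper_K_poset (Vs i)) /\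
    (forall i, i < l ->
       exists n : Vs i,
         maximal_in (Vs i) (allP (Vs i)) n /\
         pos_height_in (Vs i) (allP (Vs i)) n /\
         splitting (Vs (S i)) (Vs i) n) /\
    simple (Vs l).
Proof.
  intros KV. destruct (list_exact V (bad V) (fin_bad V KV)) as [lb [_ Hlb]].
  exact (main_ind (length lb) V KV (ex_intro _ lb (conj (le_n _) (fun v Hv => proj1 (Hlb v) Hv)))).
Qed.
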